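(* Let $\mathcal{A}$ be a finite set of arms, $1\le B\le|\mathcal{A}|$, and fix a sequence of cost functions $c_1,\dots,c_T:\mathcal{A}\to[0,1]$. For $t\ge 0$ let $a_t^{*,j}$ be the $j$-th lowest cumulative cost arm after the first $t$ rounds, i.e. ordered by $\sum_{s=1}^t c_s(a)$ with ties broken arbitrarily, and let $S_t^*:=\{a_{t-1}^{*,j}: j\in[B]\}$ be the set of the $B$ lowest cumulative cost arms at the end of round $t-1$. For $i\in\{0,\dots,T\}$ define \[R_i:=\sum_{t=1}^i c_t(S_t^* )-\min_{a^*\in\mathcal{A}}\sum_{t=1}^i c_t(a^* ),\] where $c_t(S):=\min_{a\in S}c_t(a)$. Then for each $i\in[T]$, \[R_i\le\sum_{t=1}^i\mathbb{1}[a_t^{*,1}\notin S_t^*]\quad\text{and}\quad R_i-R_{i-1}\le\mathbb{1}[a_i^{*,1}\notin S_i^*].\] *)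

(* Defs.v *)
From HB Require Import structures.
From mathcomp Require Import all_boot all_order all_algebra.
Set Implicit Arguments. Unset Strict Implicit. Unset Printing Implicit Defensive.
Import Order.TTheory GRing.Theory Num.Theory.
Local Open Scope ring_scope.

Definition cumcost (R : realFieldType) (A : finType) (c : nat -> A -> R)
  (t : nat) (a : A) : R := \sum_(1 <= s < t.+1) c s a.

(* Minimum of f over the set S; a0 is a witness element of S (so the
   minimum is the genuine minimum over the nonempty set S). *)
Definition minover (R : realFieldType) (A : finType) (S : {set A})
  (f : A -> R) (a0 : A) : R := \big[Num.min/f a0]_(a in S) f a.

(* ord t : 'I_#|A| -> A lists the arms in nondecreasing order of cumulative
   cost after t rounds: ord t j is the (j+1)-th lowest cumulative cost arm,
   i.e. a_t^{star,j+1}.  Ties are broken arbitrarily (ord is arbitrary subject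
   to these conditions). *)
Definition valid_order (R : realFieldType) (A : finType) (c : nat -> A -> R)
  (ord : nat -> 'I_#|A| -> A) (t : nat) : Prop :=
  injective (ord t) /\
  (forall i j : 'I_#|A|, (i <= j)%N -> cumcost c t (ord t i) <= cumcost c t (ord t j)).

Definition Sstar (A : finType) (ord : nat -> 'I_#|A| -> A) (B t : nat) : {set A} :=
  [set ord t.-1 j | j : 'I_#|A| & (j < B)%N].

Definition best (A : finType) (ord : nat -> 'I_#|A| -> A) (h : (0 < #|A|)%N)
  (t : nat) : A := ord t (Ordinal h).

Definition regret (R : realFieldType) (A : finType) (c : nat -> A -> R)
  (ord : nat -> 'I_#|A| -> A) (B : nat) (h : (0 < #|A|)%N) (i : nat) : R :=
  \sum_(1 <= t < i.+1) minover (Sstar ord B t) (c t) (best ord h t.-1)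
  - minover [set: A] (cumcost c i) (best ord h i).

(* Main.v *)
Require Import Defs.
From HB Require Import structures.
From mathcomp Require Import all_boot all_order all_algebra.
From mathcomp Require Import lra.
Import Order.TTheory GRing.Theory Num.Theory.
Local Open Scope ring_scope.

Theorem lemma3 (R : realFieldType) (A : finType) (B T : nat)
  (hB : (1 <= B)%N) (hBA : (B <= #|A|)%N)
  (c : nat -> A -> R)
  (hc : forall t a, (1 <= t <= T)%N -> 0 <= c t a <= 1)
  (ord : nat -> 'I_#|A| -> A)
  (hord : forall t, (t <= T)%N -> valid_order c ord t) :
  forall i : nat, (1 <= i <= T)%N ->
    regret c ord B (leq_trans hB hBA) i <=
      \sum_(1 <= t < i.+1)
        (best ord (leq_trans hB hBA) t \notin Sstar ord B t)%:R
    /\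
    regret c ord B (leq_trans hB hBA) i - regret c ord B (leq_trans hB hBA) i.-1
      <= (best ord (leq_trans hB hBA) i \notin Sstar ord B i)%:R.
Proof.
set h := leq_trans hB hBA.
have Lmin : forall t a, (t <= T)%N -> cumcost c t (best ord h t) <= cumcost c t a.
  move=> t a tT; have [inj mono] := hord t tT.
  have /codomP [j ->] : a \in codom (ord t) by apply: inj_card_onto; rewrite ?card_ord.
  by apply: mono.
have Mt : forall t, (t <= T)%N -> minover [set: A] (cumcost c t) (best ord h t)
                                   = cumcost c t (best ord h t).
  move=> t tT; apply/le_anti/andP; split.
    by apply: bigmin_le_cond; rewrite in_setT.
  by apply: le_bigmin => // a _; apply: Lmin.
have L0 : forall a, cumcost c 0 a = 0 by move=> a; rewrite /cumcost big_geq.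
have LS : forall t a, cumcost c t.+1 a = cumcost c t a + c t.+1 a.
  by move=> t a; rewrite /cumcost big_nat_recr.
have mS : forall t a, a \in Sstar ord B t -> minover (Sstar ord B t) (c t) (best ord h t.-1) <= c t a.
  by move=> t a aS; apply: bigmin_le_cond.
have bS : forall t, best ord h t.-1 \in Sstar ord B t.
  by move=> t; apply/imsetP; exists (Ordinal h) => //; rewrite inE /=.
have R0 : regret c ord B h 0 = 0.
  rewrite /regret big_geq // Mt // L0; by rewrite subrr.
have step : forall k, (k < T)%N -> regret c ord B h k.+1 - regret c ord B h k
     <= (best ord h k.+1 \notin Sstar ord B k.+1)%:R.
  move=> k kT.
  rewrite /regret big_nat_recr //= (Mt k.+1 kT) (Mt k (ltnW kT)) LS.
  have H1 := Lmin k (best ord h k.+1) (ltnW kT).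
  have hc1 : 0 <= c k.+1 (best ord h k.+1) <= 1 by apply: hc; rewrite ltnS kT.
  have hc2 : 0 <= c k.+1 (best ord h k) <= 1 by apply: hc; rewrite ltnS kT.
  have hm1 := mS k.+1 _ (bS k.+1).
  move: hc1 hc2 => /andP[h1 h2] /andP[h3 h4].
  case: (boolP (best ord h k.+1 \in Sstar ord B k.+1)) => bin /=.
    have := mS _ _ bin.
    move: (\sum_(_ <= _ < _) _) => s; lra.
  move: (\sum_(_ <= _ < _) _) => s; lra.
have part1 : forall i, (i <= T)%N -> regret c ord B h i <=
      \sum_(1 <= t < i.+1) (best ord h t \notin Sstar ord B t)%:R.
  elim=> [|k IH] kT; first by rewrite R0 big_geq.
  rewrite big_nat_recr //=.
  have := step k kT; have := IH (ltnW kT); lra.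
move=> [|k] /andP[// kT1 kT]; split; first exact: part1.
exact: step.
Qed.
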